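(* (a) For an integer $k\ge2$, with $P_k$, $Z_k$, $\Lambda_k$, $p_j$ as below, every global trajectory $\gamma$ of $Z_k$ with $\gamma(0)\in\Lambda_k$ has the property that for every $t\in\mathbb{R}$ there exists a unique $t^*\in[t,t+1)$ with $\gamma(t^* )\in\{(p_j,0):j=1,\dots,k-1\}$. (b) Every global trajectory $\gamma$ of $Z_\infty$ with $\gamma(0)\in\Lambda_\infty$ has the property that for every $t\in\mathbb{R}$ there exists a unique $t^*\in[t,t+1)$ with $\gamma(t^* )\in\{(j,0):j\in\mathbb{Z}\}$.
   Context: $P_k(x)=-\left(x+\frac{k-1}{2}\right)\left(x-\frac{k-1}{2}\right)\prod_{i=1}^{k-1}\left(x-\left(i-\frac k2\right)\right)^2$, $r_0=\frac{1-k}{2}$, $r_1=\frac{k-1}{2}$, $p_j=j-\frac k2$; $Z_k=(X_k,Y_k)$ with $X_k(x,y)=(1,P_k'(x))$ on $y\ge0$, $Y_k(x,y)=(-1,P_k'(x))$ on $y\le0$; $\Lambda_k=\{(x,\pm P_k(x)):r_0\le x\le r_1\}$. $Z_\infty$: $X_\infty(x,y)=(1,2\sin(2\pi x))$ on $y\ge0$, $Y_\infty(x,y)=(-1,2\sin(2\pi x))$ on $y\le0$; $\Lambda_\infty=\{(x,\pm P_\infty(x)):x\in\mathbb{R}\}$ with $P_\infty(x)=\frac{1-\cos(2\pi x)}{\pi}$. PSVF conventions: switching manifold $\Sigma=\{y=0\}=f^{-1}(0)$, $f(x,y)=y$; $Wf=\langle\nabla f,W\rangle$, $W^2f=\langle\nabla(Wf),W\rangle$;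 crossing region $\Sigma^c=\{Xf\cdot Yf>0\}$ ($\Sigma^{c\pm}$ according to the common sign), sliding $\Sigma^s=\{Xf<0<Yf\}$, escaping $\Sigma^e=\{Yf<0<Xf\}$, sliding field $Z^T=(Yf\,X-Xf\,Y)/(Yf-Xf)$. Local trajectories (Filippov): off $\Sigma$ follow $X$ or $Y$; through $\Sigma^{c+}$ follow $Y$ for $t\le0$ and $X$ for $t\ge0$ (reversed on $\Sigma^{c-}$); on $\Sigma^e$ follow $Z^T$ for $t\le0$ and one of $X,Y,Z^T$ for $t\ge0$ (reversed on $\Sigma^s$); at a regular tangency (not invisible for both fields) follow one of $X,Y,Z^T$ for $t\le0$ and one for $t\ge0$; singular tangencies are stationary. A global trajectory $\gamma:\mathbb{R}\to\mathbb{R}^2$ is a concatenation of orientation-preserving local trajectories $\sigma_i$ on $[t_i,t_{i+1}]$, $i\in\mathbb{Z}$, with $\sigma_i(t_{i+1})=\sigma_{i+1}(t_{i+1})$, $t_i\to\pm\infty$. *)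

(* Defs.v *)
From Stdlib Require Import Reals ZArith.
From Coquelicot Require Import Coquelicot.
Open Scope R_scope.

Definition pt := (R * R)%type.

(** W f = <grad f, W> = second component of W, since grad f = (0,1). *)
Definition Wf (W : pt -> pt) (p : pt) : R := snd (W p).

Definition W2f (W : pt -> pt) (p : pt) : R :=
  Derive (fun s => Wf W (s, snd p)) (fst p) * fst (W p)
  + Derive (fun s => Wf W (fst p, s)) (snd p) * snd (W p).

Definition onSigma (p : pt) : Prop := snd p = 0.

Section Regions.
Variables X Y : pt -> pt.

Definition crossing_plus (p : pt) : Prop := onSigma p /\ Wf X p > 0 /\ Wf Y p > 0.
Definition crossing_minus (p : pt) : Prop := onSigma p /\ Wf X p < 0 /\ Wf Y p < 0.
Definition sliding (p : pt) : Prop := onSigma p /\ Wf X p < 0 < Wf Y p.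
Definition escaping (p : pt) : Prop := onSigma p /\ Wf Y p < 0 < Wf X p.
Definition tangency (p : pt) : Prop := onSigma p /\ Wf X p * Wf Y p = 0.

(** Invisible fold: X lives on y >= 0, Y on y <= 0. *)
Definition invisible_X (p : pt) : Prop := Wf X p = 0 /\ W2f X p < 0.
Definition invisible_Y (p : pt) : Prop := Wf Y p = 0 /\ W2f Y p > 0.

Definition regular_tangency (p : pt) : Prop :=
  tangency p /\ ~ (invisible_X p /\ invisible_Y p).
Definition singular_tangency (p : pt) : Prop :=
  tangency p /\ invisible_X p /\ invisible_Y p.

Definition ZT (p : pt) : pt :=
  ((Wf Y p * fst (X p) - Wf X p * fst (Y p)) / (Wf Y p - Wf X p),
   (Wf Y p * snd (X p) - Wf X p * snd (Y p)) / (Wf Y p - Wf X p)).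

Definition solves (W : pt -> pt) (phi : R -> pt) (u v : R) : Prop :=
  (forall t, u <= t <= v -> forall eps, 0 < eps -> exists delta, 0 < delta /\
     forall s, u <= s <= v -> Rabs (s - t) < delta ->
       Rabs (fst (phi s) - fst (phi t)) < eps /\ Rabs (snd (phi s) - snd (phi t)) < eps) /\
  (forall t, u < t < v ->
     is_derive (fun s => fst (phi s)) t (fst (W (phi t))) /\
     is_derive (fun s => snd (phi s)) t (snd (W (phi t)))).

Definition follow_X (phi : R -> pt) (u v : R) : Prop :=
  solves X phi u v /\ (forall t, u < t < v -> snd (phi t) > 0).
Definition follow_Y (phi : R -> pt) (u v : R) : Prop :=
  solves Y phi u v /\ (forall t, u < t < v -> snd (phi t) < 0).
Definition follow_ZT (phi : R -> pt) (u v : R) : Prop :=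
  solves ZT phi u v /\ (forall t, u <= t <= v -> onSigma (phi t)) /\
  (forall t, u < t < v -> sliding (phi t) \/ escaping (phi t)).
Definition follow_any (phi : R -> pt) (u v : R) : Prop :=
  follow_X phi u v \/ follow_Y phi u v \/ follow_ZT phi u v.

Definition local_traj (phi : R -> pt) (a b : R) : Prop :=
  a <= 0 <= b /\
  (snd (phi 0) > 0 -> follow_X phi a b) /\
  (snd (phi 0) < 0 -> follow_Y phi a b) /\
  (crossing_plus (phi 0) -> follow_Y phi a 0 /\ follow_X phi 0 b) /\
  (crossing_minus (phi 0) -> follow_X phi a 0 /\ follow_Y phi 0 b) /\
  (escaping (phi 0) -> follow_ZT phi a 0 /\ follow_any phi 0 b) /\
  (sliding (phi 0) -> follow_any phi a 0 /\ follow_ZT phi 0 b) /\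
  (regular_tangency (phi 0) -> follow_any phi a 0 /\ follow_any phi 0 b) /\
  (singular_tangency (phi 0) -> forall t, a <= t <= b -> phi t = phi 0).

(** Global trajectory: concatenation of orientation-preserving (time-shifted) local
    trajectories on [tau i, tau (i+1)], i in Z, with tau i -> +-oo. *)
Definition global_traj (gamma : R -> pt) : Prop :=
  exists tau : Z -> R,
    (forall i, tau i < tau (i + 1)%Z) /\
    (forall M, exists i, M < tau i) /\
    (forall M, exists i, tau i < M) /\
    (forall i, exists c, tau i <= c <= tau (i + 1)%Z /\
        local_traj (fun s => gamma (s + c)) (tau i - c) (tau (i + 1)%Z - c)).

End Regions.

Fixpoint prodsq (k n : nat) (x : R) : R :=
  match n with
  | O => 1
  | S m => prodsq k m x * (x - (INR (S m) - INR k / 2)) ^ 2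
  end.

Definition r0 (k : nat) : R := (1 - INR k) / 2.
Definition r1 (k : nat) : R := (INR k - 1) / 2.
Definition pj (k j : nat) : R := INR j - INR k / 2.

Definition Pk (k : nat) (x : R) : R :=
  - ((x + (INR k - 1) / 2) * (x - (INR k - 1) / 2)) * prodsq k (k - 1) x.

Definition Xk (k : nat) (p : pt) : pt := (1, Derive (Pk k) (fst p)).
Definition Yk (k : nat) (p : pt) : pt := (-1, Derive (Pk k) (fst p)).

Definition Lambdak (k : nat) (p : pt) : Prop :=
  exists x, r0 k <= x <= r1 k /\ (p = (x, Pk k x) \/ p = (x, - Pk k x)).

Definition Xinf (p : pt) : pt := (1, 2 * sin (2 * PI * fst p)).
Definition Yinf (p : pt) : pt := (-1, 2 * sin (2 * PI * fst p)).
Definition Pinf (x : R) : R := (1 - cos (2 * PI * x)) / PI.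
Definition Lambdainf (p : pt) : Prop :=
  exists x, p = (x, Pinf x) \/ p = (x, - Pinf x).

(* Main.v *)
Require Import Defs.
From Stdlib Require Import Reals ZArith Lra Lia Classical.
From Coquelicot Require Import Coquelicot.
Open Scope R_scope.


Lemma deriv_cont f x l : is_derive f x l -> continuity_pt f x.
Proof.
  intro H. apply is_derive_Reals in H.
  apply derivable_continuous_pt. exists l. exact H.
Qed.

Lemma cont_eps f x : continuity_pt f x ->
  forall eps, 0 < eps -> exists d, 0 < d /\ forall s, Rabs (s - x) < d -> Rabs (f s - f x) < eps.
Proof.
  intros H eps He. destruct (H eps He) as [d [Hd Hs]].
  exists d. split; [exact Hd|]. intros s Hsx.
  destruct (Req_dec s x) as [->|Hne].
  - rewrite Rminus_diag, Rabs_R0. exact He.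
  - apply (Hs s). split. split; [exact I|auto]. exact Hsx.
Qed.

Lemma const_open h u v : (forall t, u < t < v -> is_derive h t 0) ->
  forall t1 t2, u < t1 < v -> u < t2 < v -> h t1 = h t2.
Proof.
  intros Hd t1 t2 H1 H2.
  destruct (MVT_gen h t1 t2 (fun _ => 0)) as [c [Hc Heq]].
  - intros x Hx. apply Hd.
    assert (u < Rmin t1 t2) by (apply Rmin_glb_lt; lra).
    assert (Rmax t1 t2 < v) by (apply Rmax_lub_lt; lra). lra.
  - intros x Hx. apply (deriv_cont _ _ 0). apply Hd.
    assert (u < Rmin t1 t2) by (apply Rmin_glb_lt; lra).
    assert (Rmax t1 t2 < v) by (apply Rmax_lub_lt; lra). lra.
  - lra.
Qed.

Lemma near_interior u v t0 d : u < v -> u <= t0 <= v -> 0 < d ->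
  exists t, u < t < v /\ Rabs (t - t0) < d.
Proof.
  intros Huv Ht0 Hd.
  destruct (Rlt_or_le t0 v) as [Hl|Hl].
  - exists (t0 + Rmin d (v - t0) / 2).
    assert (0 < Rmin d (v - t0)) by (apply Rmin_glb_lt; lra).
    assert (Rmin d (v - t0) <= d) by apply Rmin_l.
    assert (Rmin d (v - t0) <= v - t0) by apply Rmin_r.
    split. lra. rewrite Rabs_right; lra.
  - exists (t0 - Rmin d (v - u) / 2).
    assert (0 < Rmin d (v - u)) by (apply Rmin_glb_lt; lra).
    assert (Rmin d (v - u) <= d) by apply Rmin_l.
    assert (Rmin d (v - u) <= v - u) by apply Rmin_r.
    split. lra. rewrite Rabs_left; lra.
Qed.

Definition relcont (f : R -> R) u v t := forall eps, 0 < eps -> exists delta, 0 < delta /\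
     forall s, u <= s <= v -> Rabs (s - t) < delta -> Rabs (f s - f t) < eps.

Lemma endpoint_eq f g u v t0 : u < v -> u <= t0 <= v -> relcont f u v t0 ->
  continuity_pt g t0 -> (forall t, u < t < v -> f t = g t) -> f t0 = g t0.
Proof.
  intros Huv Ht0 Hf Hg Heq.
  destruct (Req_dec (f t0) (g t0)) as [E|E]; [exact E|exfalso].
  set (e := Rabs (f t0 - g t0) / 2).
  assert (He : 0 < e) by (unfold e; assert (0 < Rabs (f t0 - g t0)) by (apply Rabs_pos_lt; intro; apply E; lra); lra).
  destruct (Hf e He) as [d1 [Hd1 H1]].
  destruct (cont_eps g t0 Hg e He) as [d2 [Hd2 H2]].
  destruct (near_interior u v t0 (Rmin d1 d2) Huv Ht0) as [t [Ht Htd]].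
  apply Rmin_glb_lt; lra.
  assert (Rmin d1 d2 <= d1) by apply Rmin_l.
  assert (Rmin d1 d2 <= d2) by apply Rmin_r.
  specialize (H1 t ltac:(lra) ltac:(lra)). specialize (H2 t ltac:(lra)).
  rewrite Heq in H1 by lra.
  assert (Rabs (f t0 - g t0) <= Rabs (g t - f t0) + Rabs (g t - g t0)).
  { replace (f t0 - g t0) with (-(g t - f t0) + (g t - g t0)) by ring.
    eapply Rle_trans. apply Rabs_triang. rewrite Rabs_Ropp. lra. }
  unfold e in *. lra.
Qed.

Lemma endpoint_sign f u v t0 : u < v -> u <= t0 <= v -> relcont f u v t0 ->
  (forall t, u < t < v -> f t > 0) -> f t0 >= 0.
Proof.
  intros Huv Ht0 Hf Hp.
  destruct (Rlt_or_le (f t0) 0) as [N|N]; [exfalso|lra].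
  destruct (Hf (- f t0) ltac:(lra)) as [d1 [Hd1 H1]].
  destruct (near_interior u v t0 d1 Huv Ht0 Hd1) as [t [Ht Htd]].
  specialize (H1 t ltac:(lra) Htd). specialize (Hp t Ht).
  apply Rabs_def2 in H1. lra.
Qed.

Lemma isd_minus f g x a b: is_derive f x a -> is_derive g x b ->
  is_derive (fun t => f t - g t) x (a - b).
Proof. intros Ha Hb. exact (is_derive_minus f g x a b Ha Hb). Qed.

Lemma isd_PC (P dP : R -> R) sg C C' t : (forall x, is_derive P x (dP x)) ->
  is_derive (fun t => sg * P (sg*t + C) + C') t (sg*(sg*dP(sg*t + C))).
Proof.
  intros HP.
  apply (is_derive_ext (fun t => (fun t => sg * P (sg*t + C)) t + (fun _ => C') t)). reflexivity.
  replace (sg*(sg*dP(sg*t + C))) with (sg*(sg*dP(sg*t + C)) + 0) by ring.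
  apply (is_derive_plus (fun t => sg * P (sg*t + C)) (fun _ => C')).
  2: (auto_derive; auto).
  apply (is_derive_scal (fun t => P (sg*t + C))).
  apply (is_derive_comp P (fun t => sg*t + C) t (dP (sg*t+C)) sg).
  apply HP.
  auto_derive; auto; ring.
Qed.

Lemma mode_formula (P dP : R -> R) (W : pt -> pt) sg phi u v :
 (forall p, W p = (sg, dP (fst p))) -> (forall x, is_derive P x (dP x)) -> sg*sg = 1 ->
 solves W phi u v -> u < v ->
 exists C C', forall t, u <= t <= v -> fst (phi t) = sg*t + C /\ snd (phi t) = sg * P (sg*t + C) + C'.
Proof.
  intros HW HP Hsg [Hc Hd] Huv.
  assert (Rc1 : forall t, u <= t <= v -> relcont (fun s => fst (phi s)) u v t).
  { intros t Ht eps He. destruct (Hc t Ht eps He) as [d [Hd0 H]]. exists d. split; auto.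
    intros s Hs Hst. apply (H s Hs Hst). }
  assert (Rc2 : forall t, u <= t <= v -> relcont (fun s => snd (phi s)) u v t).
  { intros t Ht eps He. destruct (Hc t Ht eps He) as [d [Hd0 H]]. exists d. split; auto.
    intros s Hs Hst. apply (H s Hs Hst). }
  set (m := (u+v)/2).
  set (C := fst (phi m) - sg * m).
  assert (E1o : forall t, u < t < v -> fst (phi t) = sg*t + C).
  { intros t Ht.
    assert (fst (phi t) - sg * t = fst (phi m) - sg * m).
    { apply (const_open (fun t => fst (phi t) - sg * t) u v); [|lra|unfold m; lra].
      intros t' Ht'. replace 0 with (sg - sg) by ring.
      apply isd_minus. destruct (Hd t' Ht') as [H1 _]. rewrite HW in H1. exact H1.
      auto_derive; auto; ring. }
    unfold C. lra. }
  assert (E1 : forall t, u <= t <= v -> fst (phi t) = sg*t + C).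
  { intros t Ht. apply (endpoint_eq (fun s => fst (phi s)) (fun s => sg*s + C) u v t Huv Ht (Rc1 t Ht)).
    apply (deriv_cont _ _ sg). auto_derive; auto; ring.
    exact E1o. }
  set (C' := snd (phi m) - sg * P (sg*m + C)).
  assert (E2o : forall t, u < t < v -> snd (phi t) = sg * P (sg*t + C) + C').
  { intros t Ht.
    assert (snd (phi t) - (sg * P (sg*t + C) + 0) = snd (phi m) - (sg * P (sg*m + C) + 0)).
    { apply (const_open (fun t => snd (phi t) - (sg * P (sg*t + C) + 0)) u v); [|lra|unfold m; lra].
      intros t' Ht'. replace 0 with (dP (sg*t'+C) - (sg*(sg*dP(sg*t' + C)))) at 1.
      apply isd_minus. destruct (Hd t' Ht') as [_ H1]. rewrite HW in H1. simpl in H1.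
      rewrite E1o in H1 by lra. exact H1.
      apply isd_PC; auto.
      replace (sg*(sg*dP(sg*t' + C))) with ((sg*sg)*dP(sg*t' + C)) by ring. rewrite Hsg. ring. }
    unfold C'. lra. }
  exists C, C'. intros t Ht. split. apply E1; auto.
  apply (endpoint_eq (fun s => snd (phi s)) (fun s => sg * P (sg*s + C) + C') u v t Huv Ht (Rc2 t Ht)).
  apply (deriv_cont _ _ _ (isd_PC P dP sg C C' t HP)).
  exact E2o.
Qed.

Definition IsInt (z : R) := exists n : Z, z = IZR n.

Lemma IsInt_sub a b : IsInt a -> IsInt b -> IsInt (a - b).
Proof. intros [n ->] [m ->]. exists (n - m)%Z. rewrite minus_IZR. ring. Qed.
Lemma IsInt_add a b : IsInt a -> IsInt b -> IsInt (a + b).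
Proof. intros [n ->] [m ->]. exists (n + m)%Z. rewrite plus_IZR. ring. Qed.
Lemma IsInt_eq a b : a = b -> IsInt a -> IsInt b.
Proof. intros ->; auto. Qed.

Lemma relcont_opp f u v t : relcont f u v t -> relcont (fun s => - f s) u v t.
Proof.
  intros H eps He. destruct (H eps He) as [d [Hd H']]. exists d; split; auto.
  intros s Hs Hst. replace (- f s - - f t) with (- (f s - f t)) by ring.
  rewrite Rabs_Ropp. auto.
Qed.

Lemma solves_rc2 W phi u v : solves W phi u v -> forall t, u <= t <= v -> relcont (fun s => snd (phi s)) u v t.
Proof.
  intros [Hc _] t Ht eps He. destruct (Hc t Ht eps He) as [d [Hd0 H]]. exists d. split; auto.
  intros s Hs Hst. apply (H s Hs Hst).
Qed.

Lemma solves_restr W phi u v u' v' : solves W phi u v -> u <= u' -> v' <= v -> solves W phi u' v'.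
Proof.
  intros [Hc Hd] H1 H2. split.
  - intros t Ht eps He. destruct (Hc t ltac:(lra) eps He) as [d [Hd0 H]]. exists d. split; auto.
    intros s Hs Hst. apply H; auto; lra.
  - intros t Ht. apply Hd. lra.
Qed.

Section Gen.
Variables (P dP : R -> R) (s0 : R) (X Y : pt -> pt).
Hypothesis HX : forall p, X p = (1, dP (fst p)).
Hypothesis HY : forall p, Y p = (-1, dP (fst p)).
Hypothesis HP : forall x, is_derive P x (dP x).
Hypothesis HSw : forall x, P x = 0 -> IsInt (2 * (x + s0)).
Hypothesis HNS : forall x, P x = 0 -> ~ singular_tangency X Y (x, 0).

Definition Inv (phi : R -> pt) a t :=
  0 <= P (fst (phi t)) /\
  ((snd (phi t) = P (fst (phi t)) /\ IsInt (fst (phi t) + s0 - t - a)) \/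
   (snd (phi t) = - P (fst (phi t)) /\ IsInt (- fst (phi t) - s0 - t - a))).

Lemma sw1 x t a : P x = 0 -> IsInt (x + s0 - t - a) -> IsInt (- x - s0 - t - a).
Proof.
  intros H0 H. apply (IsInt_eq ((x + s0 - t - a) - 2 * (x + s0))). ring.
  apply IsInt_sub; auto.
Qed.
Lemma sw2 x t a : P x = 0 -> IsInt (- x - s0 - t - a) -> IsInt (x + s0 - t - a).
Proof.
  intros H0 H. apply (IsInt_eq ((- x - s0 - t - a) + 2 * (x + s0))). ring.
  apply IsInt_add; auto.
Qed.

Lemma half_X phi u v a w : follow_X X phi u v -> u <= w <= v -> Inv phi a w ->
  forall t, u <= t <= v -> Inv phi a t.
Proof.
  intros [Hs Hpos] Hw Iw t Ht.
  destruct (Req_dec u v) as [E|Huv].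
  { replace t with w by lra. exact Iw. }
  assert (Huv' : u < v) by lra.
  destruct (mode_formula P dP X 1 phi u v) as [C [C' F]];
    [intros p; rewrite HX; reflexivity | exact HP | ring | exact Hs | exact Huv' |].
  assert (Ynn : forall s, u <= s <= v -> snd (phi s) >= 0).
  { intros s Hs'. apply (endpoint_sign _ u v s Huv' Hs' (solves_rc2 _ _ _ _ Hs s Hs')). exact Hpos. }
  assert (Hup : snd (phi w) = P (fst (phi w)) /\ IsInt (fst (phi w) + s0 - w - a)).
  { destruct Iw as [Pn [[A1 A2]|[A1 A2]]]. auto.
    assert (P (fst (phi w)) = 0) by (specialize (Ynn w Hw); lra).
    split. lra. apply sw2; auto. }
  destruct (F w Hw) as [Fw1 Fw2]. destruct (F t Ht) as [Ft1 Ft2].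
  rewrite !Rmult_1_l in *.
  assert (C' = 0) by (destruct Hup as [Hup _]; rewrite Fw1 in Hup; lra).
  split. rewrite Ft1. specialize (Ynn t Ht). lra.
  left. split. rewrite Ft2, Ft1. lra.
  apply (IsInt_eq (fst (phi w) + s0 - w - a)). rewrite Ft1, Fw1. ring. apply Hup.
Qed.

Lemma half_Y phi u v a w : follow_Y Y phi u v -> u <= w <= v -> Inv phi a w ->
  forall t, u <= t <= v -> Inv phi a t.
Proof.
  intros [Hs Hneg] Hw Iw t Ht.
  destruct (Req_dec u v) as [E|Huv].
  { replace t with w by lra. exact Iw. }
  assert (Huv' : u < v) by lra.
  destruct (mode_formula P dP Y (-1) phi u v) as [C [C' F]];
    [intros p; rewrite HY; reflexivity | exact HP | ring | exact Hs | exact Huv' |].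
  assert (Ynp : forall s, u <= s <= v -> - snd (phi s) >= 0).
  { intros s Hs'. apply (endpoint_sign (fun s => - snd (phi s)) u v s Huv' Hs').
    apply relcont_opp. apply (solves_rc2 _ _ _ _ Hs s Hs').
    intros s1 Hs1. specialize (Hneg s1 Hs1). lra. }
  assert (Hlo : snd (phi w) = - P (fst (phi w)) /\ IsInt (- fst (phi w) - s0 - w - a)).
  { destruct Iw as [Pn [[A1 A2]|[A1 A2]]]. 2: auto.
    assert (P (fst (phi w)) = 0) by (specialize (Ynp w Hw); lra).
    split. lra. apply sw1; auto. }
  destruct (F w Hw) as [Fw1 Fw2]. destruct (F t Ht) as [Ft1 Ft2].
  assert (C' = 0) by (destruct Hlo as [Hlo _]; rewrite Fw1 in Hlo; lra).
  split. rewrite Ft1. specialize (Ynp t Ht). lra.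
  right. split. rewrite Ft2, Ft1. lra.
  apply (IsInt_eq (- fst (phi w) - s0 - w - a)). rewrite Ft1, Fw1. ring. apply Hlo.
Qed.

Lemma half_any phi u v a w : follow_any X Y phi u v -> u <= w <= v -> Inv phi a w ->
  forall t, u <= t <= v -> Inv phi a t.
Proof.
  intros [H|[H|H]] Hw Iw.
  - eapply half_X; eauto.
  - eapply half_Y; eauto.
  - intros t Ht. destruct (Req_dec u v) as [E|Huv].
    { replace t with w by lra. exact Iw. }
    exfalso. destruct H as [_ [_ H]].
    destruct (H ((u+v)/2) ltac:(lra)) as [[_ S]|[_ S]];
    unfold Wf in S; rewrite HX, HY in S; simpl in S; lra.
Qed.

Lemma fX_restr phi u v u' v' : follow_X X phi u v -> u <= u' -> v' <= v -> follow_X X phi u' v'.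
Proof. intros [H1 H2] ? ?. split. eapply solves_restr; eauto. intros; apply H2; lra. Qed.
Lemma fY_restr phi u v u' v' : follow_Y Y phi u v -> u <= u' -> v' <= v -> follow_Y Y phi u' v'.
Proof. intros [H1 H2] ? ?. split. eapply solves_restr; eauto. intros; apply H2; lra. Qed.

Lemma local_split phi A B : local_traj X Y phi A B ->
  A <= 0 <= B /\
  ((singular_tangency X Y (phi 0) /\ forall t, A <= t <= B -> phi t = phi 0) \/
   (follow_any X Y phi A 0 /\ follow_any X Y phi 0 B)).
Proof.
  intros [Hab [H1 [H2 [H3 [H4 [H5 [H6 [H7 H8]]]]]]]]. split; auto.
  destruct (Rtotal_order (snd (phi 0)) 0) as [Hn|[Hz|Hp]].
  - right. specialize (H2 Hn). split; right; left; eapply fY_restr; eauto; lra.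
  - assert (EX : Wf X (phi 0) = dP (fst (phi 0))) by (unfold Wf; rewrite HX; reflexivity).
    assert (EY : Wf Y (phi 0) = dP (fst (phi 0))) by (unfold Wf; rewrite HY; reflexivity).
    destruct (Rtotal_order (dP (fst (phi 0))) 0) as [Dn|[Dz|Dp]].
    + right. destruct H4 as [A1 A2]. unfold crossing_minus, onSigma. rewrite EX, EY. auto.
      split; [left|right;left]; auto.
    + destruct (classic (invisible_X X (phi 0) /\ invisible_Y Y (phi 0))) as [S|NS].
      * left. assert (ST : singular_tangency X Y (phi 0)).
        { split; [split; [exact Hz| rewrite EX, Dz; ring] | exact S]. }
        split. exact ST. apply H8. exact ST.
      * right. apply H7. split; auto. split. exact Hz. rewrite EX, Dz. ring.
    + right. destruct H3 as [A1 A2]. unfold crossing_plus, onSigma. rewrite EX, EY. auto.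
      split; [right;left|left]; auto.
  - right. specialize (H1 Hp). split; left; eapply fX_restr; eauto; lra.
Qed.

Lemma piece_inv phi A B a w : local_traj X Y phi A B -> A <= w <= B -> Inv phi a w ->
  forall t, A <= t <= B -> Inv phi a t.
Proof.
  intros HL Hw Iw.
  destruct (local_split phi A B HL) as [Hab [[S C]|[F1 F2]]].
  - exfalso. assert (E : phi w = phi 0) by (apply C; auto).
    destruct Iw as [Pn Hb]. rewrite E in Pn, Hb.
    assert (Hz : onSigma (phi 0)) by apply S. unfold onSigma in Hz.
    assert (P (fst (phi 0)) = 0) by (destruct Hb as [[B1 _]|[B1 _]]; lra).
    apply (HNS (fst (phi 0)) H).
    replace (fst (phi 0), 0) with (phi 0). exact S.
    destruct (phi 0); simpl in *; subst; reflexivity.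
  - destruct (Rle_or_lt w 0) as [Hw0|Hw0].
    + assert (I0 : Inv phi a 0) by (apply (half_any phi A 0 a w); auto; lra).
      intros t Ht. destruct (Rle_or_lt t 0).
      * apply (half_any phi A 0 a w); auto; lra.
      * apply (half_any phi 0 B a 0); auto; lra.
    + assert (I0 : Inv phi a 0) by (apply (half_any phi 0 B a w); auto; lra).
      intros t Ht. destruct (Rle_or_lt t 0).
      * apply (half_any phi A 0 a 0); auto; lra.
      * apply (half_any phi 0 B a w); auto; lra.
Qed.

Lemma Inv_shift gamma c a t : Inv (fun s => gamma (s + c)) (a + c) (t - c) <-> Inv gamma a t.
Proof.
  unfold Inv. replace (t - c + c) with t by ring.
  replace (fst (gamma t) + s0 - (t - c) - (a + c)) with (fst (gamma t) + s0 - t - a) by ring.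
  replace (- fst (gamma t) - s0 - (t - c) - (a + c)) with (- fst (gamma t) - s0 - t - a) by ring.
  tauto.
Qed.

Lemma piece_inv_g gamma a (t1 t2 c w : R) :
  t1 <= c <= t2 -> local_traj X Y (fun s => gamma (s + c)) (t1 - c) (t2 - c) ->
  t1 <= w <= t2 -> Inv gamma a w -> forall t, t1 <= t <= t2 -> Inv gamma a t.
Proof.
  intros Hc HL Hw Iw t Ht. apply (Inv_shift gamma c).
  apply (piece_inv _ (t1 - c) (t2 - c) (a + c) (w - c)); auto; try lra.
  apply Inv_shift; auto.
Qed.

Lemma tau_mono (tau : Z -> R) : (forall i, tau i < tau (i + 1)%Z) ->
  forall i j, (i <= j)%Z -> tau i <= tau j.
Proof.
  intros H i j Hij.
  replace j with (i + Z.of_nat (Z.to_nat (j - i)))%Z by lia.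
  induction (Z.to_nat (j - i)) as [|n IH].
  - replace (i + Z.of_nat 0)%Z with i by lia. lra.
  - replace (i + Z.of_nat (S n))%Z with ((i + Z.of_nat n) + 1)%Z by lia.
    specialize (H (i + Z.of_nat n)%Z). lra.
Qed.

Lemma tau_find (tau : Z -> R) : (forall i, tau i < tau (i + 1)%Z) ->
  (forall M, exists i, M < tau i) -> (forall M, exists i, tau i < M) ->
  forall t, exists i, tau i <= t < tau (i + 1)%Z.
Proof.
  intros H Hu Hl t.
  destruct (Hl t) as [i1 Hi1]. destruct (Hu t) as [i2 Hi2].
  assert (Hlt : (i1 < i2)%Z).
  { destruct (Z_lt_le_dec i1 i2) as [?|Hle]; auto.
    pose proof (tau_mono tau H i2 i1 Hle). lra. }
  assert (G : forall n : nat, forall i, tau i <= t -> t < tau (i + Z.of_nat n)%Z ->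
            exists i0, tau i0 <= t < tau (i0 + 1)%Z).
  { induction n as [|n IH]; intros i Ha Hb.
    - replace (i + Z.of_nat 0)%Z with i in Hb by lia. lra.
    - destruct (Rlt_or_le t (tau (i + 1)%Z)) as [L|L].
      + exists i. lra.
      + apply (IH (i + 1)%Z L). replace (i + 1 + Z.of_nat n)%Z with (i + Z.of_nat (S n))%Z by lia. exact Hb. }
  apply (G (Z.to_nat (i2 - i1)) i1). lra.
  replace (i1 + Z.of_nat (Z.to_nat (i2 - i1)))%Z with i2 by lia. exact Hi2.
Qed.

Theorem global_inv gamma a : global_traj X Y gamma -> Inv gamma a 0 -> forall t, Inv gamma a t.
Proof.
  intros [tau [Hinc [Hu [Hl Hp]]]] I0.
  assert (PI : forall i w, tau i <= w <= tau (i+1)%Z -> Inv gamma a w ->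
             forall t, tau i <= t <= tau (i+1)%Z -> Inv gamma a t).
  { intros i w Hw Iw. destruct (Hp i) as [c [Hc HL]].
    apply (piece_inv_g gamma a (tau i) (tau (i+1)%Z) c w); auto. }
  destruct (tau_find tau Hinc Hu Hl 0) as [i0 Hi0].
  assert (Fw : forall n : nat, forall t, tau (i0 + Z.of_nat n)%Z <= t <= tau (i0 + Z.of_nat n + 1)%Z -> Inv gamma a t).
  { induction n as [|n IH].
    - replace (i0 + Z.of_nat 0)%Z with i0 by lia. apply (PI i0 0). lra. exact I0.
    - replace (i0 + Z.of_nat (S n))%Z with (i0 + Z.of_nat n + 1)%Z by lia.
      apply (PI _ (tau (i0 + Z.of_nat n + 1)%Z)). pose proof (Hinc (i0 + Z.of_nat n + 1)%Z). lra.
      apply IH. pose proof (Hinc (i0 + Z.of_nat n)%Z). lra. }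
  assert (Bw : forall n : nat, forall t, tau (i0 - Z.of_nat n)%Z <= t <= tau (i0 - Z.of_nat n + 1)%Z -> Inv gamma a t).
  { induction n as [|n IH].
    - replace (i0 - Z.of_nat 0)%Z with (i0 + Z.of_nat 0)%Z by lia. apply Fw.
    - apply (PI _ (tau (i0 - Z.of_nat (S n) + 1)%Z)). pose proof (Hinc (i0 - Z.of_nat (S n))%Z). lra.
      apply IH. replace (i0 - Z.of_nat (S n) + 1)%Z with (i0 - Z.of_nat n)%Z by lia.
      pose proof (Hinc (i0 - Z.of_nat n)%Z). lra. }
  intros t. destruct (tau_find tau Hinc Hu Hl t) as [i Hi].
  destruct (Z_le_gt_dec i0 i) as [L|L].
  - apply (Fw (Z.to_nat (i - i0))). replace (i0 + Z.of_nat (Z.to_nat (i - i0)))%Z with i by lia. lra.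
  - apply (Bw (Z.to_nat (i0 - i))). replace (i0 - Z.of_nat (Z.to_nat (i0 - i)))%Z with i by lia. lra.
Qed.

End Gen.

Lemma isd_mult f g x a b : is_derive f x a -> is_derive g x b ->
  is_derive (fun t => f t * g t) x (a * g x + f x * b).
Proof. intros Ha Hb. exact (is_derive_mult f g x a b Ha Hb Rmult_comm). Qed.

Definition C2 (f : R -> R) := exists f1 f2 : R -> R,
  forall x, is_derive f x (f1 x) /\ is_derive f1 x (f2 x).

Lemma C2_ext f g : C2 f -> (forall x, f x = g x) -> C2 g.
Proof.
  intros [f1 [f2 H]] E. exists f1, f2. intros x. destruct (H x) as [H1 H2].
  split; auto. eapply is_derive_ext; eauto.
Qed.

Lemma C2_mult f g : C2 f -> C2 g -> C2 (fun t => f t * g t).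
Proof.
  intros [f1 [f2 Hf]] [g1 [g2 Hg]].
  exists (fun t => f1 t * g t + f t * g1 t), (fun t => f2 t * g t + f1 t * g1 t + (f1 t * g1 t + f t * g2 t)).
  intros x. destruct (Hf x) as [F1 F2]. destruct (Hg x) as [G1 G2]. split.
  - apply isd_mult; auto.
  - apply (is_derive_plus (fun t => f1 t * g t) (fun t => f t * g1 t)); apply isd_mult; auto.
Qed.

Lemma C2_quad c d : C2 (fun x => - ((x + c) * (x - d))).
Proof.
  exists (fun x => - (2 * x + c - d)), (fun _ => -2). intros x. split; auto_derive; auto; ring.
Qed.

Lemma C2_sq c : C2 (fun x => (x - c) ^ 2).
Proof.
  exists (fun x => 2 * (x - c)), (fun _ => 2). intros x. split; auto_derive; auto; ring.
Qed.

Lemma C2_const c : C2 (fun _ => c).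
Proof.
  exists (fun _ => 0), (fun _ => 0). intros x. split; auto_derive; auto.
Qed.

Lemma C2_prodsq k n : C2 (prodsq k n).
Proof.
  induction n as [|n IH].
  - apply (C2_ext (fun _ => 1)). apply C2_const. reflexivity.
  - apply (C2_ext (fun t => prodsq k n t * (t - (INR (S n) - INR k / 2)) ^ 2)).
    apply C2_mult; auto. apply C2_sq. reflexivity.
Qed.

Lemma C2_Pk k : C2 (Pk k).
Proof.
  apply (C2_ext (fun x => - ((x + (INR k - 1) / 2) * (x - (INR k - 1) / 2)) * prodsq k (k - 1) x)).
  apply C2_mult. apply C2_quad. apply C2_prodsq. reflexivity.
Qed.

Lemma mvt (f f1 : R -> R) (a b : R) : (forall x, is_derive f x (f1 x)) -> a < b ->
  exists c, a <= c <= b /\ f b - f a = f1 c * (b - a).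
Proof.
  intros H Hab. destruct (MVT_gen f a b f1) as [c [Hc E]].
  - intros; apply H.
  - intros; eapply deriv_cont; apply H.
  - exists c. rewrite Rmin_left, Rmax_right in Hc by lra. auto.
Qed.

Lemma no_neg_second (f f1 : R -> R) (x0 D del : R) : (forall x, is_derive f x (f1 x)) -> is_derive f1 x0 D ->
  f1 x0 = 0 -> f x0 = 0 -> 0 < del ->
  ((forall x, x0 - del <= x <= x0 -> 0 <= f x) \/ (forall x, x0 <= x <= x0 + del -> 0 <= f x)) ->
  0 <= D.
Proof.
  intros Hf HD H1 H0 Hdel Hside.
  destruct (Rle_or_lt 0 D) as [?|Dn]; auto. exfalso.
  apply is_derive_Reals in HD.
  destruct (HD (- D / 2) ltac:(lra)) as [e He].
  pose proof (cond_pos e) as Hepos.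
  set (eta := Rmin e del / 2).
  assert (Heta : 0 < eta) by (unfold eta; assert (0 < Rmin e del) by (apply Rmin_glb_lt; lra); lra).
  assert (Heta1 : eta < e) by (unfold eta; pose proof (Rmin_l e del); assert (0 < Rmin e del) by (apply Rmin_glb_lt; lra); lra).
  assert (Heta2 : eta <= del) by (unfold eta; pose proof (Rmin_r e del); assert (0 < Rmin e del) by (apply Rmin_glb_lt; lra); lra).
  assert (Q : forall h, h <> 0 -> Rabs h <= eta -> f1 (x0 + h) / h < 0).
  { intros h Hh Hha. specialize (He h Hh ltac:(lra)). rewrite H1 in He.
    rewrite Rminus_0_r in He. apply Rabs_def2 in He. lra. }
  assert (Sg : forall y, y <> x0 -> Rabs (y - x0) <= eta -> f1 y = (f1 y / (y - x0)) * (y - x0) /\ f1 y / (y - x0) < 0).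
  { intros y Hy Hya. split. field. lra.
    specialize (Q (y - x0) ltac:(lra) Hya). replace (x0 + (y - x0)) with y in Q by ring. exact Q. }
  destruct Hside as [L|Rt].
  - assert (Pos : forall y, x0 - eta <= y < x0 -> f1 y > 0).
    { intros y Hy. destruct (Sg y ltac:(lra)) as [E1 E2].
      rewrite Rabs_left by lra. lra.
      rewrite E1. set (q := f1 y / (y - x0)) in *. nra. }
    assert (Pos' : forall y, x0 - eta <= y <= x0 -> f1 y >= 0).
    { intros y Hy. destruct (Req_dec y x0) as [->|Hne]. lra. specialize (Pos y ltac:(lra)). lra. }
    destruct (mvt f f1 (x0 - eta/2) x0 Hf ltac:(lra)) as [c1 [Hc1 E1]].
    destruct (mvt f f1 (x0 - eta) (x0 - eta/2) Hf ltac:(lra)) as [c2 [Hc2 E2]].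
    specialize (Pos' c1 ltac:(lra)). specialize (Pos c2 ltac:(lra)).
    specialize (L (x0 - eta) ltac:(lra)). nra.
  - assert (Neg : forall y, x0 < y <= x0 + eta -> f1 y < 0).
    { intros y Hy. destruct (Sg y ltac:(lra)) as [E1 E2].
      rewrite Rabs_right by lra. lra.
      rewrite E1. set (q := f1 y / (y - x0)) in *. nra. }
    assert (Neg' : forall y, x0 <= y <= x0 + eta -> f1 y <= 0).
    { intros y Hy. destruct (Req_dec y x0) as [->|Hne]. lra. specialize (Neg y ltac:(lra)). lra. }
    destruct (mvt f f1 x0 (x0 + eta/2) Hf ltac:(lra)) as [c1 [Hc1 E1]].
    destruct (mvt f f1 (x0 + eta/2) (x0 + eta) Hf ltac:(lra)) as [c2 [Hc2 E2]].
    specialize (Neg' c1 ltac:(lra)). specialize (Neg c2 ltac:(lra)).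
    specialize (Rt (x0 + eta) ltac:(lra)). nra.
Qed.

Lemma prodsq_nonneg k n x : 0 <= prodsq k n x.
Proof.
  induction n as [|n IH]; simpl. lra.
  apply Rmult_le_pos; auto. apply pow2_ge_0.
Qed.

Lemma prodsq_zero k n x : prodsq k n x = 0 -> exists i, (1 <= i <= n)%nat /\ x = INR i - INR k / 2.
Proof.
  induction n as [|n IH]; cbn [prodsq]; intros H. lra.
  apply Rmult_integral in H. destruct H as [H|H].
  - destruct (IH H) as [i [Hi E]]. exists i. split; auto. lia.
  - exists (S n). split. lia.
    cbn [pow] in H. rewrite Rmult_1_r in H. apply Rmult_integral in H. destruct H; lra.
Qed.

Lemma prodsq_at k n j : (1 <= j <= n)%nat -> prodsq k n (INR j - INR k / 2) = 0.
Proof.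
  induction n as [|n IH]; intros Hj. lia.
  cbn [prodsq]. destruct (Nat.eq_dec j (S n)) as [->|Hne].
  - ring.
  - rewrite IH by lia. ring.
Qed.

Lemma Pk_eq k x : Pk k x = - ((x + (INR k - 1) / 2) * (x - (INR k - 1) / 2)) * prodsq k (k - 1) x.
Proof. reflexivity. Qed.

Lemma INR_km1 k : (1 <= k)%nat -> INR (k - 1) = INR k - 1.
Proof. intros; rewrite minus_INR by lia. reflexivity. Qed.

Lemma Pk_nonneg k x : r0 k <= x <= r1 k -> 0 <= Pk k x.
Proof.
  unfold r0, r1. intros Hx. rewrite Pk_eq. pose proof (prodsq_nonneg k (k-1) x).
  apply Rmult_le_pos; auto. nra.
Qed.

Lemma Pk_range k x : (2 <= k)%nat -> 0 <= Pk k x -> r0 k <= x <= r1 k.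
Proof.
  intros Hk H. unfold r0, r1.
  pose proof (le_INR 2 k Hk) as Hk2. simpl in Hk2.
  set (c := (INR k - 1) / 2) in *.
  assert (Hc : c >= 1/2) by (unfold c; lra).
  replace ((1 - INR k) / 2) with (- c) by (unfold c; field).
  destruct (Rle_lt_dec (- c) x) as [L1|L1]; destruct (Rle_lt_dec x c) as [L2|L2]; try (split; lra);
  exfalso; rewrite Pk_eq in H; fold c in H; pose proof (prodsq_nonneg k (k-1) x) as Hp;
  (assert (Ha : (x + c) * (x - c) > 0) by
     (assert (HH : (x + c < 0 /\ x - c < 0) \/ (x + c > 0 /\ x - c > 0)) by lra;
      destruct HH as [[? ?]|[? ?]]; nra));
  (assert (Hab : 0 <= (x + c) * (x - c) * prodsq k (k-1) x) by (apply Rmult_le_pos; lra));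
  (assert (Hq : prodsq k (k-1) x = 0) by
     (destruct (Rle_lt_dec (prodsq k (k-1) x) 0) as [Q|Q]; [lra| exfalso;
      assert (0 < (x + c) * (x - c) * prodsq k (k-1) x) by (apply Rmult_lt_0_compat; lra); lra]));
  destruct (prodsq_zero _ _ _ Hq) as [i [Hi E]];
  pose proof (le_INR 1 i ltac:(lia)); pose proof (le_INR i (k-1) ltac:(lia));
  rewrite INR_km1 in * by lia; simpl in *; unfold c in *; lra.
Qed.

Lemma Pk_zeros k x : Pk k x = 0 ->
  x = - ((INR k - 1) / 2) \/ x = (INR k - 1) / 2 \/ exists i, (1 <= i <= k - 1)%nat /\ x = INR i - INR k / 2.
Proof.
  rewrite Pk_eq. intros H. apply Rmult_integral in H. destruct H as [H|H].
  - assert (A : (x + (INR k - 1) / 2) * (x - (INR k - 1) / 2) = 0) by lra.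
    apply Rmult_integral in A. lra.
  - right; right. apply prodsq_zero; auto.
Qed.

Lemma Pk_Sw k x : Pk k x = 0 -> IsInt (2 * (x + INR k / 2)).
Proof.
  intros H.
  destruct (Pk_zeros k x H) as [E|[E|[i [Hi E]]]]; rewrite E.
  - exists 1%Z. simpl. field.
  - exists (2 * Z.of_nat k - 1)%Z. rewrite minus_IZR, mult_IZR, <- INR_IZR_INZ. simpl. field.
  - exists (2 * Z.of_nat i)%Z. rewrite mult_IZR, <- INR_IZR_INZ. simpl. field.
Qed.

Lemma Pk_NS k x : (2 <= k)%nat -> Pk k x = 0 -> ~ singular_tangency (Xk k) (Yk k) (x, 0).
Proof.
  intros Hk H0 [[_ Ht] [[_ Hinv] _]].
  destruct (C2_Pk k) as [f1 [f2 Hf]].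
  assert (D1 : forall s, Derive (Pk k) s = f1 s) by (intros s; apply is_derive_unique, Hf).
  unfold Wf, Xk, Yk in Ht. simpl in Ht. rewrite D1 in Ht.
  assert (F0 : f1 x = 0) by nra.
  unfold W2f, Wf, Xk in Hinv. simpl in Hinv.
  rewrite (Derive_ext (fun s => Derive (Pk k) s) f1) in Hinv by exact D1.
  rewrite (is_derive_unique f1 x (f2 x)) in Hinv by apply Hf.
  rewrite D1, F0 in Hinv.
  assert (Hn : 0 <= f2 x).
  { apply (no_neg_second (Pk k) f1 x (f2 x) (1/2)); auto.
    intros y; apply Hf. apply Hf. lra.
    pose proof (le_INR 2 k Hk). simpl in H.
    destruct (Pk_zeros k x H0) as [E|[E|[i [Hi E]]]].
    - right. intros y Hy. apply Pk_nonneg. unfold r0, r1. simpl in *. lra.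
    - left. intros y Hy. apply Pk_nonneg. unfold r0, r1. simpl in *. lra.
    - left. intros y Hy. apply Pk_nonneg. unfold r0, r1.
      pose proof (le_INR 1 i ltac:(lia)); pose proof (le_INR i (k-1) ltac:(lia)).
      rewrite INR_km1 in * by lia. simpl in *. lra. }
  lra.
Qed.

Lemma IsInt_opp a : IsInt a -> IsInt (- a).
Proof. intros [n ->]. exists (- n)%Z. rewrite opp_IZR. ring. Qed.
Lemma IsInt_INR j : IsInt (INR j).
Proof. exists (Z.of_nat j). apply INR_IZR_INZ. Qed.

Lemma unique_int t a : exists! ts, t <= ts < t + 1 /\ IsInt (ts + a).
Proof.
  set (z := - (t + a)). destruct (archimed z) as [A1 A2].
  exists (IZR (1 - up z) - a). split.
  - rewrite minus_IZR. simpl. split. unfold z in *. lra.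
    exists (1 - up z)%Z. rewrite minus_IZR. simpl. ring.
  - intros ts [Hts [n Hn]]. rewrite minus_IZR. simpl.
    assert (IZR n - IZR (1 - up z) < 1 /\ IZR n - IZR (1 - up z) > -1) as [B1 B2].
    { rewrite minus_IZR. simpl. unfold z in *. lra. }
    rewrite <- minus_IZR in B1, B2. change 1 with (IZR 1) in B1. change (-1) with (IZR (-1)) in B2.
    apply lt_IZR in B1. apply Rgt_lt in B2. apply lt_IZR in B2.
    assert (n = (1 - up z)%Z) by lia. subst n. rewrite minus_IZR in Hn. simpl in Hn. lra.
Qed.

Lemma transfer (Q : R -> Prop) t a : (forall ts, t <= ts < t + 1 -> (Q ts <-> IsInt (ts + a))) ->
  exists! ts, t <= ts < t + 1 /\ Q ts.
Proof.
  intros H. destruct (unique_int t a) as [ts [[H1 H2] U]].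
  exists ts. split. split; auto. apply H; auto.
  intros ts' [H1' H2']. apply U. split; auto. apply H; auto.
Qed.

Lemma Pk_der k x : is_derive (Pk k) x (Derive (Pk k) x).
Proof.
  destruct (C2_Pk k) as [f1 [f2 Hf]].
  rewrite (is_derive_unique _ _ _ (proj1 (Hf x))). apply Hf.
Qed.

Lemma Pk_pj k j : (1 <= j <= k - 1)%nat -> Pk k (pj k j) = 0.
Proof. intros Hj. rewrite Pk_eq. unfold pj. rewrite prodsq_at by lia. ring. Qed.

Theorem part_a : forall (k : nat), (2 <= k)%nat ->
    forall gamma : R -> pt,
      global_traj (Xk k) (Yk k) gamma -> Lambdak k (gamma 0) ->
      forall t : R, exists! ts : R, t <= ts < t + 1 /\
        exists j : nat, (1 <= j <= k - 1)%nat /\ gamma ts = (pj k j, 0).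
Proof.
  intros k Hk gamma Hg HL t.
  set (s0 := INR k / 2).
  assert (HX : forall p, Xk k p = (1, Derive (Pk k) (fst p))) by reflexivity.
  assert (HY : forall p, Yk k p = (-1, Derive (Pk k) (fst p))) by reflexivity.
  assert (I0 : exists a, Inv (Pk k) s0 gamma a 0).
  { destruct HL as [x [Hx [E|E]]].
    - exists (x + s0). unfold Inv. rewrite E. simpl. split. apply Pk_nonneg; auto.
      left. split; auto. exists 0%Z. simpl. ring.
    - exists (- x - s0). unfold Inv. rewrite E. simpl. split. apply Pk_nonneg; auto.
      right. split; auto. exists 0%Z. simpl. ring. }
  destruct I0 as [a I0].
  pose proof (global_inv (Pk k) (Derive (Pk k)) s0 (Xk k) (Yk k) HX HY (Pk_der k)
    (Pk_Sw k) (fun x H => Pk_NS k x Hk H) gamma a Hg I0) as Iall.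
  apply (transfer _ t a). intros ts _. specialize (Iall ts).
  pose proof (le_INR 2 k Hk) as Hk2. simpl in Hk2.
  split.
  - intros [j [Hj E]]. unfold Inv in Iall. rewrite E in Iall. simpl in Iall.
    destruct Iall as [_ [[_ Q]|[_ Q]]].
    + apply (IsInt_eq (INR j - (pj k j + s0 - ts - a))). unfold pj, s0. ring.
      apply IsInt_sub; auto. apply IsInt_INR.
    + apply (IsInt_eq (- INR j - (- pj k j - s0 - ts - a))). unfold pj, s0. ring.
      apply IsInt_sub; auto. apply IsInt_opp, IsInt_INR.
  - intros Hta. unfold Inv in Iall. destruct (gamma ts) as [x y] eqn:Eg. simpl in Iall.
    destruct Iall as [Pn Hc].
    assert (Hm : IsInt (x + s0)).
    { destruct Hc as [[_ Q]|[_ Q]].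
      - apply (IsInt_eq ((x + s0 - ts - a) + (ts + a))). ring. apply IsInt_add; auto.
      - apply (IsInt_eq (- ((- x - s0 - ts - a) + (ts + a)))). ring. apply IsInt_opp, IsInt_add; auto. }
    destruct Hm as [m Hm].
    destruct (Pk_range k x Hk Pn) as [R1 R2]. unfold r0, r1, s0 in *.
    assert (M1 : (0 < m)%Z) by (apply lt_IZR; simpl; lra).
    assert (M2 : (m < Z.of_nat k)%Z) by (apply lt_IZR; rewrite <- INR_IZR_INZ; lra).
    exists (Z.to_nat m).
    assert (Ej : INR (Z.to_nat m) = IZR m) by (rewrite INR_IZR_INZ, Z2Nat.id by lia; reflexivity).
    assert (Hj : (1 <= Z.to_nat m <= k - 1)%nat) by lia.
    assert (Ex : x = pj k (Z.to_nat m)) by (unfold pj; rewrite Ej; lra).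
    split; auto.
    rewrite <- Ex. f_equal. pose proof (Pk_pj k _ Hj) as Z0. rewrite <- Ex in Z0.
    destruct Hc as [[Q _]|[Q _]]; lra.
Qed.

Lemma Pinf_der x : is_derive Pinf x (2 * sin (2 * PI * x)).
Proof.
  unfold Pinf. pose proof PI_RGT_0. auto_derive. auto. field. lra.
Qed.

Lemma Pinf_nonneg x : 0 <= Pinf x.
Proof.
  unfold Pinf. pose proof PI_RGT_0. pose proof (COS_bound (2 * PI * x)) as [_ C].
  unfold Rdiv. apply Rmult_le_pos. lra. left. apply Rinv_0_lt_compat. lra.
Qed.

Lemma Pinf_zero x : Pinf x = 0 -> cos (2 * PI * x) = 1 /\ sin (2 * PI * x) = 0.
Proof.
  unfold Pinf. intros H. pose proof PI_RGT_0.
  assert (C : cos (2 * PI * x) = 1).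
  { assert (1 - cos (2 * PI * x) = 0); [|lra].
    replace (1 - cos (2 * PI * x)) with ((1 - cos (2 * PI * x)) / PI * PI) by (field; lra).
    rewrite H. ring. }
  split; auto. pose proof (sin2_cos2 (2 * PI * x)) as S. unfold Rsqr in S. rewrite C in S.
  nra.
Qed.

Lemma Pinf_Sw x : Pinf x = 0 -> IsInt (2 * (x + 0)).
Proof.
  intros H. destruct (Pinf_zero x H) as [_ S]. destruct (sin_eq_0_0 _ S) as [m Hm].
  exists m. pose proof PI_RGT_0.
  apply (Rmult_eq_reg_r PI). rewrite <- Hm. ring. lra.
Qed.

Lemma Pinf_int m : Pinf (IZR m) = 0.
Proof.
  unfold Pinf. replace (2 * PI * IZR m) with (2 * (IZR m * PI)) by ring.
  rewrite cos_2a_sin. rewrite sin_eq_0_1 by (exists m; reflexivity). unfold Rdiv. ring.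
Qed.

Lemma Pinf_NS x : Pinf x = 0 -> ~ singular_tangency Xinf Yinf (x, 0).
Proof.
  intros H0 [_ [[_ Hinv] _]]. destruct (Pinf_zero x H0) as [C S].
  unfold W2f, Wf, Xinf in Hinv. simpl in Hinv.
  assert (D : Derive (fun s : R => 2 * sin (2 * PI * s)) x = 2 * (cos (2 * PI * x) * (2 * PI))).
  { apply is_derive_unique. auto_derive; auto; ring. }
  rewrite D, C, S in Hinv. pose proof PI_RGT_0. lra.
Qed.

Theorem part_b : forall gamma : R -> pt,
      global_traj Xinf Yinf gamma -> Lambdainf (gamma 0) ->
      forall t : R, exists! ts : R, t <= ts < t + 1 /\
        exists j : Z, gamma ts = (IZR j, 0).
Proof.
  intros gamma Hg HL t.
  assert (HX : forall p, Xinf p = (1, (fun x => 2 * sin (2 * PI * x)) (fst p))) by reflexivity.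
  assert (HY : forall p, Yinf p = (-1, (fun x => 2 * sin (2 * PI * x)) (fst p))) by reflexivity.
  assert (I0 : exists a, Inv Pinf 0 gamma a 0).
  { destruct HL as [x [E|E]].
    - exists (x + 0). unfold Inv. rewrite E. simpl. split. apply Pinf_nonneg.
      left. split; auto. exists 0%Z. simpl. ring.
    - exists (- x - 0). unfold Inv. rewrite E. simpl. split. apply Pinf_nonneg.
      right. split; auto. exists 0%Z. simpl. ring. }
  destruct I0 as [a I0].
  pose proof (global_inv Pinf (fun x => 2 * sin (2 * PI * x)) 0 Xinf Yinf HX HY Pinf_der
    Pinf_Sw Pinf_NS gamma a Hg I0) as Iall.
  apply (transfer _ t a). intros ts _. specialize (Iall ts).
  split.
  - intros [j E]. unfold Inv in Iall. rewrite E in Iall. simpl in Iall.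
    destruct Iall as [_ [[_ Q]|[_ Q]]].
    + apply (IsInt_eq (IZR j - (IZR j + 0 - ts - a))). ring.
      apply IsInt_sub; auto. exists j; reflexivity.
    + apply (IsInt_eq (- IZR j - (- IZR j - 0 - ts - a))). ring.
      apply IsInt_sub; auto. apply IsInt_opp. exists j; reflexivity.
  - intros Hta. unfold Inv in Iall. destruct (gamma ts) as [x y] eqn:Eg. simpl in Iall.
    destruct Iall as [Pn Hc].
    assert (Hm : IsInt (x + 0)).
    { destruct Hc as [[_ Q]|[_ Q]].
      - apply (IsInt_eq ((x + 0 - ts - a) + (ts + a))). ring. apply IsInt_add; auto.
      - apply (IsInt_eq (- ((- x - 0 - ts - a) + (ts + a)))). ring. apply IsInt_opp, IsInt_add; auto. }
    destruct Hm as [m Hm]. exists m.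
    assert (Ex : x = IZR m) by lra. subst x.
    pose proof (Pinf_int m). destruct Hc as [[Q _]|[Q _]]; f_equal; lra.
Qed.

Theorem mainTheorem11 :
  (forall (k : nat), (2 <= k)%nat ->
    forall gamma : R -> pt,
      global_traj (Xk k) (Yk k) gamma -> Lambdak k (gamma 0) ->
      forall t : R, exists! ts : R, t <= ts < t + 1 /\
        exists j : nat, (1 <= j <= k - 1)%nat /\ gamma ts = (pj k j, 0))
  /\
  (forall gamma : R -> pt,
      global_traj Xinf Yinf gamma -> Lambdainf (gamma 0) ->
      forall t : R, exists! ts : R, t <= ts < t + 1 /\
        exists j : Z, gamma ts = (IZR j, 0)).
Proof.
  split. exact part_a. exact part_b.
Qed.
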